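(* For every $m\ge1$, let $V^{(1)}_m$ and $V^{(2)}_m$ be the linear spans in $\mathbb{C}[\mathbb{S}_m]$ of all one-hyper-arc elements and of all two-hyper-arc elements, respectively, and let $R_m$ be the span of all $\alpha-\sigma_m^{-1}\alpha\sigma_m$, $\alpha\in\mathbb{S}_m$. Then $V^{(1)}_m+V^{(2)}_m=R_m+V^{(2)}_m$; i.e. modulo two-hyper-arc relations, the one-hyper-arc relations are equivalent to identifying each permutation with its cyclic shifts.
   Context: $\sigma_m=(1,2,\dots,m)\in\mathbb{S}_m$. Generalized Vassiliev elements: let $m\ge2$, $\gamma\in\mathbb{S}_{m-1}$, and $q\in[m-1]\cup\{*\}$. For $t\in\{0,1,\dots,m-1\}$ let $\alpha_t=\alpha_t(\gamma,q)\in\mathbb{S}_m$ be obtained as follows: place the points $1,\dots,m-1$ on a line in increasing order, insert a new point $x$ (the free leg) in the gap between $t$ and $t+1$ (before $1$ if $t=0$, after $m-1$ if $t=m-1$), and relabel the $m$ points by $1,\dots,m$ in order; the permutation acts as $\gamma$ on the old points, except that if $q\neq *$ then $q\mapsto x\mapsto\gamma(q)$, and if $q=*$ then $x$ is a fixed point. For a cycle $v$ of $\gamma$ put $E(\gamma,q,v)=\sum_{j\in v}(\alpha_{j-1}-\alpha_j)\in\mathbb{C}[\mathbb{S}_m]$. It is a one-hyper-arc element if $q\ne*$ and $q\in v$, and a two-hyper-arc element otherwise. *)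

(* Defs.v *)
From HB Require Import structures.
From mathcomp Require Import all_boot all_order all_algebra all_fingroup.
From mathcomp Require Import reals complex.
Set Implicit Arguments. Unset Strict Implicit. Unset Printing Implicit Defensive.
Import GRing.Theory Num.Theory.
Local Open Scope ring_scope.

(* The group algebra C[S_m] is modelled as the C-vector space of functions
   S_m -> C, with basis the indicators [perm_delta s]. We index by n = m - 1,
   so S_m = {perm 'I_n.+1} (points 0..m-1 stand for 1..m). *)

Definition GA (R : realType) (n : nat) := {ffun {perm 'I_n.+1} -> (R[i])^o}.

Definition pdelta (R : realType) (n : nat) (s : {perm 'I_n.+1}) : GA R n :=
  [ffun t => ((t == s)%:R : (R[i])^o)].

Definition sigma (n : nat) : {perm 'I_n.+1} := perm (@ordS_inj n.+1).

(* alpha_t(gamma, q) in S_m, gamma in S_{m-1}, q : option 'I_n (None = star),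
   t : 'I_n.+1 (the new point x receives 0-indexed label t, i.e. sits in the gap
   between old points t and t+1 in 1-indexed terms; old 0-indexed point i is
   relabelled lift t i = i + (t <= i)).
   lift_perm t t gamma fixes x and acts as gamma on the old points;
   composing first with the transposition (x, q) yields q |-> x |-> gamma q.
   (mathcomp product s1 * s2 applies s1 first.) *)
Definition alpha (n : nat) (gamma : {perm 'I_n}) (q : option 'I_n)
    (t : 'I_n.+1) : {perm 'I_n.+1} :=
  match q with
  | None => lift_perm t t gamma
  | Some q0 => (tperm t (lift t q0) * lift_perm t t gamma)%g
  end.

(* E(gamma, q, v) = sum_{j in v} (alpha_{j-1} - alpha_j), j 1-indexed;
   with 0-indexed i = j - 1 this is alpha_i - alpha_{i+1}. *)
Definition Eel (R : realType) (n : nat) (gamma : {perm 'I_n})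
    (q : option 'I_n) (v : {set 'I_n}) : GA R n :=
  \sum_(i in v) (pdelta R (alpha gamma q (inord i))
                 - pdelta R (alpha gamma q (inord i.+1))).

Definition one_hyper (n : nat) (q : option 'I_n) (v : {set 'I_n}) : bool :=
  if q is Some q0 then q0 \in v else false.

Definition V1 (R : realType) (n : nat) : {vspace GA R n} :=
  (\sum_(gamma : {perm 'I_n}) \sum_(q : option 'I_n)
     \sum_(v in porbits gamma | one_hyper q v) <[Eel R gamma q v]>)%VS.

Definition V2 (R : realType) (n : nat) : {vspace GA R n} :=
  (\sum_(gamma : {perm 'I_n}) \sum_(q : option 'I_n)
     \sum_(v in porbits gamma | ~~ one_hyper q v) <[Eel R gamma q v]>)%VS.

(* R_m: span of alpha - sigma^{-1} o alpha o sigma (function composition,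
   right to left); in mathcomp's left-to-right product this is
   sigma * alpha * sigma^-1. *)
Definition Rm (R : realType) (n : nat) : {vspace GA R n} :=
  (\sum_(a : {perm 'I_n.+1})
     <[pdelta R a - pdelta R ((sigma n * a * (sigma n)^-1)%g)]>)%VS.

(* Main.v *)
Require Import Defs.
From HB Require Import structures.
From mathcomp Require Import all_boot all_order all_algebra all_fingroup.
From mathcomp Require Import reals complex.
Local Open Scope ring_scope.
Import GRing.Theory.

Section Aux.
Variable (R : realType) (n : nat).

Lemma alpha_lift (g : {perm 'I_n}) q t k :
  alpha g q t (lift t k) = if q == Some k then t else lift t (g k).
Proof.
case: q => [q0|] /=; last by rewrite lift_perm_lift.
rewrite permM.
have [->|ne] := eqVneq q0 k.
  by rewrite eqxx tpermR lift_perm_id.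
have -> : (Some q0 == Some k) = false by apply/eqP => -[] /eqP; rewrite (negbTE ne).
rewrite tpermD ?lift_perm_lift ?neq_lift //.
by rewrite (inj_eq (@lift_inj _ t)).
Qed.

Lemma alpha_t (g : {perm 'I_n}) q t :
  alpha g q t t = if q is Some q0 then lift t (g q0) else t.
Proof.
case: q => [q0|] /=; last by rewrite lift_perm_id.
by rewrite permM tpermL lift_perm_lift.
Qed.

Lemma sigma_lift k : sigma n (lift ord_max k) = lift ord0 k.
Proof.
apply/val_inj; rewrite /sigma permE /= /bump /=.
rewrite leqNgt ltn_ord /= add0n add1n modn_small // ltnS; exact: ltn_ord.


Qed.

Lemma sigma_max : sigma n ord_max = ord0.
Proof. by apply/val_inj; rewrite /sigma permE /= modnn. Qed.

Lemma alpha_conj (g : {perm 'I_n}) q :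
  alpha g q ord_max = (sigma n * alpha g q ord0 * (sigma n)^-1)%g.
Proof.
apply/permP => x; rewrite !permM; apply: (@perm_inj _ (sigma n)); rewrite permKV.
case: (unliftP ord_max x) => [k|] ->.
  rewrite !alpha_lift sigma_lift alpha_lift.
  by case: ifP => _; rewrite ?sigma_max ?sigma_lift.
rewrite sigma_max !alpha_t; case: q => [q0|]; by rewrite ?sigma_lift ?sigma_max.
Qed.

Lemma sumE (g : {perm 'I_n}) q :
  \sum_(v in porbits g) Eel R g q v =
  pdelta R (alpha g q ord0) - pdelta R (alpha g q ord_max).
Proof.
pose h (k : nat) := pdelta R (alpha g q (inord k)).
transitivity (\sum_(i : 'I_n) (h i - h i.+1)).
  rewrite [RHS](partition_big (porbit g) (mem (porbits g))); last first.
    by move=> i _; apply: imset_f.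
  apply: eq_bigr => v /imsetP [x _ ->].
  by apply: eq_bigl => j; rewrite /= eq_porbit_mem.
rewrite -(big_mkord xpredT (fun i => h i - h i.+1)).
under eq_bigr do rewrite -opprB.
rewrite sumrN telescope_sumr // opprB /h.
have -> : (inord 0 : 'I_n.+1) = ord0 by apply/val_inj; rewrite /= inordK.
by have -> : (inord n : 'I_n.+1) = ord_max by apply/val_inj; rewrite /= inordK.
Qed.


Lemma alpha_surj (a : {perm 'I_n.+1}) :
  exists g q, alpha g q ord0 = a.
Proof.
pose ulsf i (s : 'S_n.+1) (k : 'I_n) := odflt k (unlift (s i) (s (lift i k))).
have ulsfK i (s : 'S_n.+1) k: lift (s i) (ulsf i s k) = s (lift i k).
  rewrite /ulsf; have:= neq_lift i k.
  by rewrite -(can_eq (permK s)) => /unlift_some[] ? ? ->.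
have inj_ulsf i (s : 'S_n.+1) : injective (ulsf i s).
  apply: (@can_inj _ _ _ (ulsf (s i) s^-1%g)) => k'.
  by rewrite {1}/ulsf ulsfK !permK liftK.
have decomp (s : 'S_n.+1) : lift_perm ord0 (s ord0) (perm (@inj_ulsf ord0 s)) = s.
  apply/permP => k.
  case: (unliftP ord0 k) => [k'|] ->; rewrite ?lift_perm_id //.
  by rewrite lift_perm_lift permE ulsfK.
pose p := (a^-1)%g ord0.
pose c := (tperm ord0 p * a)%g.
have c0 : c ord0 = ord0 by rewrite /c permM tpermL /p permKV.
have Ec := decomp c; rewrite c0 in Ec.
case: (unliftP ord0 p) => [q0|] Ep.
  exists (perm (@inj_ulsf ord0 c)), (Some q0) => /=.
  by rewrite Ec /c -Ep mulgA tperm2 mul1g.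
exists (perm (@inj_ulsf ord0 c)), None => /=.
by rewrite Ec /c Ep tperm1 mul1g.
Qed.

Lemma E1 (g : {perm 'I_n}) q v :
  v \in porbits g -> one_hyper q v -> Eel R g q v \in V1 R n.
Proof.
move=> vo oh; rewrite memvE /V1.
apply: (sumv_sup g) => //; apply: (sumv_sup q) => //.
by apply: (sumv_sup v); [rewrite vo oh|].
Qed.

Lemma E2 (g : {perm 'I_n}) q v :
  v \in porbits g -> ~~ one_hyper q v -> Eel R g q v \in V2 R n.
Proof.
move=> vo oh; rewrite memvE /V2.
apply: (sumv_sup g) => //; apply: (sumv_sup q) => //.
by apply: (sumv_sup v); [rewrite vo oh|].
Qed.

Lemma inRm (a : {perm 'I_n.+1}) :
  pdelta R a - pdelta R ((sigma n * a * (sigma n)^-1)%g) \in Rm R n.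
Proof. by rewrite memvE /Rm; apply: (sumv_sup a). Qed.

End Aux.

Theorem lemma2 (R : realType) (n : nat) :
  (V1 R n + V2 R n)%VS = (Rm R n + V2 R n)%VS.
Proof.
apply/eqP; rewrite eqEsubv; apply/andP; split; rewrite subv_add addvSr andbT.
  apply/subv_sumP => g _; apply/subv_sumP => q _; apply/subv_sumP => v /andP[vo oh].
  rewrite -memvE.
  have := @sumE R n g q; rewrite (bigD1 v vo) /= => /(canRL (addrK _)) ->.
  apply: memv_add; first by rewrite alpha_conj inRm.
  rewrite memvN; apply: memv_suml => v' /andP[v'o nv].
  apply: E2 => //; move: oh; rewrite /one_hyper; case: q => // q0 q0v.
  apply/negP => q0v'; move: nv; apply/negP; rewrite negbK.
  case/imsetP: vo => x _ vx; case/imsetP: v'o => y _ v'y.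
  rewrite vx v'y in q0v q0v' *.
  rewrite -eq_porbit_mem in q0v; rewrite -eq_porbit_mem in q0v'; by rewrite -(eqP q0v) -(eqP q0v').
apply/subv_sumP => a _; rewrite -memvE.
have [g [q <-]] := @alpha_surj n a.
rewrite -alpha_conj -sumE; apply: memv_suml => v vo.
case oh: (one_hyper q v).
  by apply: (subvP (addvSl _ _)); apply: E1.
by apply: (subvP (addvSr _ _)); apply: E2; rewrite ?oh.
Qed.
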